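(* Let $n\ge1$ and let $\delta$ be a dependent variable of $\mathsf{Q}$. Let $\mathcal T$ consist of the two formulas $(\delta,1)\leftrightarrow(\phi_1,1)\land\dots\land(\phi_n,1)$ and $(\delta,0)\leftrightarrow(\phi_1,0)\land\dots\land(\phi_n,0)$. Then every evaluation satisfying $\mathcal T$ has $\delta^+=\{(1,\dots,1)\}$ and $\delta^-=\{(0,\dots,0)\}$; for such an evaluation, $\delta$ holds at each world $w=(c_1,\dots,c_n)\in W$ to the degree $\frac1n(c_1+\dots+c_n)$; consequently, for all $c_1,\dots,c_n\in[0,1]$, $\mathcal T$ entails $(\phi_1,c_1)\land\dots\land(\phi_n,c_n)\to\big(\delta,\tfrac{c_1+\dots+c_n}{n}\big)$.
   Context: The logic $\mathsf{Q}$: fix $n\ge1$, basic variables $\phi_1,\dots,\phi_n$ and countably many dependent variables $\alpha_1,\alpha_2,\dots$. A graded variable is a pair $(\alpha,c)$ with $\alpha$ a variable and $c\in[0,1]$. Formulas are built from graded variables by classical $\land,\lor,\lnot$; $\Phi\to\Psi$ abbreviates $\lnot\Phi\lor\Psi$ and $\leftrightarrow$ is the usual biconditional. The set of worlds is $W=[0,1]^n$ with metric $d((c_1,\dots,c_n),(d_1,\dots,d_n))=\sum_i|c_i-d_i|$, and $d(w,A)=\inf_{a\in A}d(w,a)$ for $A\subseteq W$. An evaluation assigns to each variable $\alpha$ a pair $(\alpha^+,\alpha^-)$ of disjoint nonempty closed subsets of $W$, with $\phi_i^+=\{(a_1,\dots,a_n):a_i=1\}$ and $\phi_i^-=\{(a_1,\dots,a_n):a_i=0\}$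 for each basic variable. At $w\in W$, $\alpha$ holds to the degree $\frac{d(w,\alpha^-)}{d(w,\alpha^+)+d(w,\alpha^-)}$. Each formula $\Phi$ is assigned $[\Phi]\subseteq W$: $[(\alpha,c)]$ is the set of worlds at which $\alpha$ holds to degree $c$, and $\land,\lor,\lnot$ are interpreted by $\cap,\cup$, complement in $W$. An evaluation satisfies $\Phi$ iff $[\Phi]=W$. A theory is a set of formulas; it is correct if some evaluation satisfies all its elements, and a correct theory $\mathcal T$ entails $\Phi$ if every evaluation satisfying all elements of $\mathcal T$ satisfies $\Phi$. *)

(* Defs.v *)
From Stdlib Require Import Reals.
Open Scope R_scope.

(** Worlds of W = [0,1]^n are represented by functions nat -> R whose
    coordinates 0..n-1 lie in [0,1] and which vanish from index n on
    (coordinate i here is c_{i+1} of the paper). *)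
Definition world := nat -> R.
Definition wset := world -> Prop.

Definition inW (n : nat) (w : world) : Prop :=
  (forall i, (i < n)%nat -> 0 <= w i <= 1) /\ (forall i, (n <= i)%nat -> w i = 0).

Fixpoint sumR (n : nat) (f : nat -> R) : R :=
  match n with O => 0 | S m => sumR m f + f m end.

Definition dist (n : nat) (w v : world) : R := sumR n (fun i => Rabs (w i - v i)).

Definition is_glb (E : R -> Prop) (m : R) : Prop :=
  (forall x, E x -> m <= x) /\ (forall b, (forall x, E x -> b <= x) -> b <= m).

Definition is_dist_set (n : nat) (A : wset) (w : world) (r : R) : Prop :=
  is_glb (fun x => exists a, A a /\ x = dist n w a) r.

Definition closedW (n : nat) (A : wset) : Prop :=
  (forall w, A w -> inW n w) /\
  (forall w, inW n w ->
     (forall eps, 0 < eps -> exists a, A a /\ dist n w a < eps) -> A w).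

Definition admissible (n : nat) (P M : wset) : Prop :=
  closedW n P /\ closedW n M /\ (exists w, P w) /\ (exists w, M w) /\
  (forall w, P w -> M w -> False).

(** Variables: basic phi_(i+1) = Basic i (i < n), dependent alpha_k = Dep k. *)
Inductive var : Type := Basic (i : nat) | Dep (k : nat).

(** An evaluation: the values of the dependent variables, each admissible;
    the basic variables have their fixed values (see [vplus], [vminus]). *)
Record evaluation (n : nat) : Type := mkEval {
  dep_val : nat -> wset * wset;
  dep_adm : forall k, admissible n (fst (dep_val k)) (snd (dep_val k)) }.

Definition vplus (n : nat) (ev : evaluation n) (v : var) : wset :=
  match v with
  | Basic i => fun w => inW n w /\ w i = 1
  | Dep k => fst (dep_val n ev k)
  end.
Definition vminus (n : nat) (ev : evaluation n) (v : var) : wset :=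
  match v with
  | Basic i => fun w => inW n w /\ w i = 0
  | Dep k => snd (dep_val n ev k)
  end.

Definition holds_deg (n : nat) (ev : evaluation n) (v : var) (w : world) (c : R) : Prop :=
  exists a b, is_dist_set n (vplus n ev v) w a /\ is_dist_set n (vminus n ev v) w b /\
              c = b / (a + b).

Inductive form : Type :=
  | GV (v : var) (c : R)
  | FAnd (A B : form)
  | FOr (A B : form)
  | FNot (A : form).

Definition FImp (A B : form) : form := FOr (FNot A) B.
Definition FIff (A B : form) : form := FAnd (FImp A B) (FImp B A).

(** BigAnd m f = f 0 /\ ... /\ f (m-1)  (intended for m >= 1) *)
Fixpoint BigAnd (m : nat) (f : nat -> form) : form :=
  match m with
  | O => f O
  | S O => f O
  | S (S _ as k) => FAnd (BigAnd k f) (f k)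
  end.

Fixpoint den (n : nat) (ev : evaluation n) (F : form) : wset :=
  match F with
  | GV v c => fun w => inW n w /\ holds_deg n ev v w c
  | FAnd A B => fun w => den n ev A w /\ den n ev B w
  | FOr A B => fun w => den n ev A w \/ den n ev B w
  | FNot A => fun w => inW n w /\ ~ den n ev A w
  end.

Definition satisfies (n : nat) (ev : evaluation n) (F : form) : Prop :=
  forall w, inW n w -> den n ev F w.

Definition satisfies_all (n : nat) (ev : evaluation n) (T : form -> Prop) : Prop :=
  forall F, T F -> satisfies n ev F.

Definition correct (n : nat) (T : form -> Prop) : Prop :=
  exists ev : evaluation n, satisfies_all n ev T.

(** entailment is only defined for correct theories *)
Definition entails (n : nat) (T : form -> Prop) (F : form) : Prop :=
  correct n T /\ forall ev : evaluation n, satisfies_all n ev T -> satisfies n ev F.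

Definition theoryT (n k : nat) : form -> Prop :=
  fun F => F = FIff (GV (Dep k) 1) (BigAnd n (fun i => GV (Basic i) 1)) \/
           F = FIff (GV (Dep k) 0) (BigAnd n (fun i => GV (Basic i) 0)).

(* Main.v *)
Require Import Defs.
From Stdlib Require Import Reals Lra Lia Classical.
Open Scope R_scope.

Lemma sumR_ext n f g : (forall i, (i<n)%nat -> f i = g i) -> sumR n f = sumR n g.
Proof. induction n; simpl; intros H; auto. rewrite IHn by (intros; apply H; lia). rewrite H by lia. reflexivity. Qed.

Lemma sumR_nonneg n f : (forall i, (i<n)%nat -> 0 <= f i) -> 0 <= sumR n f.
Proof. induction n; simpl; intros H; [lra|]. assert (0 <= f n) by (apply H; lia).
  assert (0 <= sumR n f) by (apply IHn; intros; apply H; lia). lra. Qed.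

Lemma sumR_ge_term n f i : (forall j, (j<n)%nat -> 0 <= f j) -> (i<n)%nat -> f i <= sumR n f.
Proof. induction n; simpl; intros H Hi; [lia|].
  assert (0 <= sumR n f) by (apply sumR_nonneg; intros; apply H; lia).
  destruct (Nat.eq_dec i n). subst; lra.
  assert (f i <= sumR n f) by (apply IHn; [intros; apply H; lia|lia]).
  assert (0 <= f n) by (apply H; lia). lra. Qed.

Lemma sumR_plus n f g : sumR n (fun i => f i + g i) = sumR n f + sumR n g.
Proof. induction n; simpl; [lra|]. rewrite IHn; lra. Qed.

Lemma sumR_one n : sumR n (fun _ => 1) = INR n.
Proof. induction n; simpl sumR; [simpl; lra|]. rewrite S_INR; lra. Qed.

Lemma sumR_zero n : sumR n (fun _ => 0) = 0.
Proof. induction n; simpl; lra. Qed.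

Lemma sumR_single n i x : (i<n)%nat -> sumR n (fun j => if Nat.eqb j i then x else 0) = x.
Proof. induction n; intros Hi; [lia|]. simpl.
  destruct (Nat.eq_dec i n).
  - subst. rewrite Nat.eqb_refl.
    rewrite (sumR_ext n _ (fun _ => 0)). rewrite sumR_zero; lra.
    intros j Hj. destruct (Nat.eqb j n) eqn:E; auto. apply Nat.eqb_eq in E; lia.
  - assert (Nat.eqb n i = false) by (apply Nat.eqb_neq; lia). rewrite H.
    rewrite IHn by lia. lra. Qed.

Lemma dist_nonneg n w a : 0 <= Defs.dist n w a.
Proof. unfold Defs.dist. apply sumR_nonneg. intros; apply Rabs_pos. Qed.

Lemma dist_self n w : Defs.dist n w w = 0.
Proof. unfold Defs.dist. rewrite (sumR_ext n _ (fun _ => 0)). apply sumR_zero.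
  intros. replace (w i - w i) with 0 by ring. apply Rabs_R0. Qed.

Lemma sum_abs_zero n f : sumR n (fun i => Rabs (f i)) = 0 -> forall i, (i<n)%nat -> f i = 0.
Proof. intros H i Hi.
  assert (Rabs (f i) <= 0).
  { rewrite <- H. apply (sumR_ge_term n (fun i => Rabs (f i))); auto. intros; apply Rabs_pos. }
  destruct (Rcase_abs (f i)).
  - rewrite Rabs_left in H0; lra.
  - rewrite Rabs_right in H0; lra. Qed.

Lemma glb_uniq E m1 m2 : is_glb E m1 -> is_glb E m2 -> m1 = m2.
Proof. intros [H1 H1'] [H2 H2']. apply Rle_antisym; auto. Qed.

Lemma dist_set_ge0 n A w r : is_dist_set n A w r -> 0 <= r.
Proof. intros [_ H]. apply H. intros x [a [_ ->]]. apply dist_nonneg. Qed.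

Lemma dist_set_zero_in n A w : closedW n A -> inW n w -> is_dist_set n A w 0 -> A w.
Proof. intros [_ Hc] Hw [_ Hg]. apply Hc; auto. intros eps Heps.
  destruct (classic (exists a, A a /\ Defs.dist n w a < eps)) as [?|Hn]; auto.
  exfalso. assert (eps <= 0); [|lra]. apply Hg. intros x [a [Ha ->]].
  apply Rnot_lt_le. intro. apply Hn. exists a; auto. Qed.

Lemma dist_set_in n (A : wset) w : A w -> is_dist_set n A w 0.
Proof. intros Hw. split.
  - intros x [a [_ ->]]. apply dist_nonneg.
  - intros b Hb. rewrite <- (dist_self n w). apply Hb. exists w; auto. Qed.

Lemma dist_exists n (A : wset) w : (exists a, A a) -> exists r, is_dist_set n A w r.
Proof. intros [a0 Ha0].
  destruct (completeness (fun y => exists a, A a /\ y = - Defs.dist n w a)) as [m [Hm1 Hm2]].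
  - exists 0. intros y [a [_ ->]]. pose proof (dist_nonneg n w a). lra.
  - exists (- Defs.dist n w a0). eauto.
  - exists (-m). split.
    + intros x [a [Ha ->]]. assert (- Defs.dist n w a <= m) by (apply Hm1; eauto). lra.
    + intros b Hb. assert (m <= -b); [|lra]. apply Hm2. intros y [a [Ha ->]].
      assert (b <= Defs.dist n w a) by (apply Hb; eauto). lra. Qed.

Lemma pt_dist n (A : wset) p w : A p -> (forall a, A a -> forall i, (i<n)%nat -> a i = p i) ->
  is_dist_set n A w (Defs.dist n w p).
Proof. intros Hp HA. split.
  - intros x [a [Ha ->]]. unfold Defs.dist. right. apply sumR_ext. intros i Hi. rewrite (HA a Ha i Hi). auto.
  - intros b Hb. apply Hb. eauto. Qed.

Lemma basic_dist n i v w : (i<n)%nat -> 0 <= v <= 1 -> inW n w ->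
  is_dist_set n (fun a => inW n a /\ a i = v) w (Rabs (w i - v)).
Proof. intros Hi Hv [Hw1 Hw2]. split.
  - intros x [a [[_ Ha] ->]]. rewrite <- Ha. unfold Defs.dist.
    apply (sumR_ge_term n (fun j => Rabs (w j - a j))); auto. intros; apply Rabs_pos.
  - intros b Hb. set (a0 := fun j => if Nat.eqb j i then v else w j).
    assert (Defs.dist n w a0 = Rabs (w i - v)).
    { unfold Defs.dist. rewrite (sumR_ext n _ (fun j => if Nat.eqb j i then Rabs (w i - v) else 0)).
      apply sumR_single; auto.
      intros j Hj. unfold a0. destruct (Nat.eqb j i) eqn:E.
      - apply Nat.eqb_eq in E; subst; auto.
      - replace (w j - w j) with 0 by ring. apply Rabs_R0. }
    rewrite <- H. apply Hb. exists a0. split; auto. split; [split|].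
    + intros j Hj. unfold a0. destruct (Nat.eqb j i); auto.
    + intros j Hj. unfold a0. assert (Nat.eqb j i = false) by (apply Nat.eqb_neq; lia).
      rewrite H0; auto.
    + unfold a0. rewrite Nat.eqb_refl; auto. Qed.

Lemma basic_deg n ev i w c : (i<n)%nat -> inW n w -> 0 <= c <= 1 ->
  (holds_deg n ev (Basic i) w c <-> c = w i).
Proof. intros Hi Hw Hc. pose proof Hw as [Hw1 _]. specialize (Hw1 i Hi).
  assert (E1 : Rabs (w i - 1) = 1 - w i) by (rewrite Rabs_left1; lra).
  assert (E0 : Rabs (w i - 0) = w i) by (rewrite Rabs_right; lra).
  split.
  - intros [a [b [Ha [Hb ->]]]].
    pose proof (basic_dist n i 1 w Hi ltac:(lra) Hw) as D1.
    pose proof (basic_dist n i 0 w Hi ltac:(lra) Hw) as D0.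
    rewrite (glb_uniq _ _ _ Ha D1), (glb_uniq _ _ _ Hb D0), E1, E0.
    replace (1 - w i + w i) with 1 by ring. unfold Rdiv; rewrite Rinv_1; ring.
  - intros ->. exists (1 - w i), (w i). split; [|split].
    + rewrite <- E1. apply (basic_dist n i 1 w Hi ltac:(lra) Hw).
    + rewrite <- E0. apply (basic_dist n i 0 w Hi ltac:(lra) Hw).
    + replace (1 - w i + w i) with 1 by ring. unfold Rdiv; rewrite Rinv_1; ring. Qed.

Lemma bigand_den_gen n ev f w m : (1 <= m)%nat ->
  (den n ev (BigAnd m f) w <-> forall i, (i<m)%nat -> den n ev (f i) w).
Proof. intros Hn. induction m as [|m IH]; [lia|].
  destruct m as [|p].
  - simpl. split; [intros H i Hi; assert (i = 0%nat) by lia; subst; auto | intros H; apply H; lia].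
  - change (BigAnd (S (S p)) f) with (FAnd (BigAnd (S p) f) (f (S p))). simpl den.
    rewrite IH by lia. split.
    + intros [H1 H2] i Hi. destruct (Nat.eq_dec i (S p)); [subst; auto|apply H1; lia].
    + intros H. split; [intros; apply H; lia| apply H; lia]. Qed.

Lemma bigand_den n ev f w : (1 <= n)%nat ->
  (den n ev (BigAnd n f) w <-> forall i, (i<n)%nat -> den n ev (f i) w).
Proof. apply bigand_den_gen. Qed.

Lemma bigand_basic n ev w v : (1 <= n)%nat -> inW n w -> 0 <= v <= 1 ->
  (den n ev (BigAnd n (fun i => GV (Basic i) v)) w <-> forall i, (i<n)%nat -> w i = v).
Proof. intros Hn Hw Hv. rewrite bigand_den by auto. simpl. split.
  - intros H i Hi. destruct (H i Hi) as [_ H2]. apply basic_deg in H2; auto.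
  - intros H i Hi. split; auto. apply basic_deg; auto. rewrite H; auto. Qed.

Lemma iff_den n ev A B w : den n ev (FIff A B) w -> (den n ev A w <-> den n ev B w).
Proof. unfold FIff, FImp. simpl. tauto. Qed.

Lemma iff_intro n ev A B w : inW n w -> (den n ev A w <-> den n ev B w) -> den n ev (FIff A B) w.
Proof. intros Hw H. unfold FIff, FImp. simpl.
  destruct (classic (den n ev A w)); destruct (classic (den n ev B w)); tauto. Qed.

Lemma dep_deg n ev k w c : (1 <= n)%nat -> inW n w ->
  (forall a, vplus n ev (Dep k) a <-> (inW n a /\ forall i, (i < n)%nat -> a i = 1)) ->
  (forall a, vminus n ev (Dep k) a <-> (inW n a /\ forall i, (i < n)%nat -> a i = 0)) ->
  (holds_deg n ev (Dep k) w c <-> c = sumR n w / INR n).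
Proof. intros Hn Hw HP HM. pose proof Hw as [Hw1 _].
  set (o := fun i => if Nat.ltb i n then 1 else 0).
  set (z := fun _ : nat => 0).
  assert (Ho : inW n o).
  { split; intros i Hi; unfold o.
    - rewrite (proj2 (Nat.ltb_lt i n) Hi); lra.
    - rewrite (proj2 (Nat.ltb_ge i n) Hi); lra. }
  assert (Hz : inW n z) by (split; intros; unfold z; lra).
  assert (D1 : is_dist_set n (vplus n ev (Dep k)) w (sumR n (fun i => 1 - w i))).
  { replace (sumR n (fun i => 1 - w i)) with (Defs.dist n w o).
    apply pt_dist. apply HP. split; auto. intros i Hi; unfold o; rewrite (proj2 (Nat.ltb_lt i n) Hi); auto.
    intros a Ha i Hi. apply HP in Ha. destruct Ha as [_ Ha]. rewrite Ha; auto.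
    unfold o; rewrite (proj2 (Nat.ltb_lt i n) Hi); auto.
    unfold Defs.dist. apply sumR_ext. intros i Hi. unfold o; rewrite (proj2 (Nat.ltb_lt i n) Hi).
    specialize (Hw1 i Hi). rewrite Rabs_left1; lra. }
  assert (D0 : is_dist_set n (vminus n ev (Dep k)) w (sumR n w)).
  { replace (sumR n w) with (Defs.dist n w z).
    apply pt_dist. apply HM. split; auto. intros a Ha i Hi. apply HM in Ha. destruct Ha as [_ Ha]. rewrite Ha; auto.
    unfold Defs.dist. apply sumR_ext. intros i Hi. unfold z.
    specialize (Hw1 i Hi). rewrite Rabs_right; lra. }
  assert (S : sumR n (fun i => 1 - w i) + sumR n w = INR n).
  { rewrite <- sumR_plus, <- sumR_one. apply sumR_ext. intros; ring. }
  split.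
  - intros [a [b [Ha [Hb ->]]]]. rewrite (glb_uniq _ _ _ Ha D1), (glb_uniq _ _ _ Hb D0), S. auto.
  - intros ->. exists (sumR n (fun i => 1 - w i)), (sumR n w). rewrite S. auto. Qed.

Lemma avg_one n w : (1 <= n)%nat -> inW n w -> (sumR n w / INR n = 1 <-> forall i, (i<n)%nat -> w i = 1).
Proof. intros Hn [Hw1 _]. assert (Hp : 0 < INR n) by (apply lt_0_INR; lia). split.
  - intros H. assert (E : sumR n w = INR n).
    { assert (sumR n w / INR n * INR n = sumR n w) by (field; lra). rewrite H in H0. lra. }
    assert (Z : sumR n (fun i => Rabs (w i - 1)) = 0).
    { rewrite (sumR_ext n _ (fun i => 1 + - w i)).
      rewrite sumR_plus, sumR_one. rewrite (sumR_ext n (fun i => - w i) (fun i => -1 * w i)) by (intros; ring).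
      assert (forall m c f, sumR m (fun i => c * f i) = c * sumR m f) as L.
      { induction m; intros; simpl; [ring| rewrite IHm; ring]. }
      rewrite L. lra.
      intros i Hi. specialize (Hw1 i Hi). rewrite Rabs_left1; lra. }
    intros i Hi. pose proof (sum_abs_zero n (fun i => w i - 1) Z i Hi). simpl in H0. lra.
  - intros H. rewrite (sumR_ext n w (fun _ => 1)) by auto. rewrite sumR_one. field. lra. Qed.

Lemma avg_zero n w : (1 <= n)%nat -> inW n w -> (sumR n w / INR n = 0 <-> forall i, (i<n)%nat -> w i = 0).
Proof. intros Hn [Hw1 _]. assert (Hp : 0 < INR n) by (apply lt_0_INR; lia). split.
  - intros H. assert (E : sumR n w = 0).
    { assert (sumR n w / INR n * INR n = sumR n w) by (field; lra). rewrite H in H0. lra. }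
    assert (Z : sumR n (fun i => Rabs (w i)) = 0).
    { rewrite <- E. apply sumR_ext. intros i Hi. specialize (Hw1 i Hi). rewrite Rabs_right; lra. }
    intros i Hi. exact (sum_abs_zero n w Z i Hi).
  - intros H. rewrite (sumR_ext n w (fun _ => 0)) by auto. rewrite sumR_zero. unfold Rdiv; ring. Qed.

Definition cset (n : nat) (v : R) : wset := fun a => inW n a /\ forall i, (i<n)%nat -> a i = v.

Lemma cset_closed n v : closedW n (cset n v).
Proof. split. intros w [H _]; auto.
  intros w Hw Hc. split; auto. intros i Hi.
  assert (Rabs (w i - v) = 0).
  { destruct (Req_dec (Rabs (w i - v)) 0) as [?|Hne]; auto.
    pose proof (Rabs_pos (w i - v)).
    destruct (Hc (Rabs (w i - v)) ltac:(lra)) as [a [[_ Ha] Hd]].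
    assert (Rabs (w i - a i) <= Defs.dist n w a).
    { unfold Defs.dist. apply (sumR_ge_term n (fun j => Rabs (w j - a j))); auto. intros; apply Rabs_pos. }
    rewrite Ha in H0 by auto. lra. }
  destruct (Rcase_abs (w i - v)); [rewrite Rabs_left in H|rewrite Rabs_right in H]; lra. Qed.

Lemma cset_nonempty n v : 0 <= v <= 1 -> exists w, cset n v w.
Proof. intros Hv. exists (fun i => if Nat.ltb i n then v else 0). split; [split|].
  - intros i Hi. rewrite (proj2 (Nat.ltb_lt i n) Hi); auto.
  - intros i Hi. rewrite (proj2 (Nat.ltb_ge i n) Hi); auto.
  - intros i Hi. rewrite (proj2 (Nat.ltb_lt i n) Hi); auto. Qed.

Lemma adm0 n : (1 <= n)%nat -> admissible n (cset n 1) (cset n 0).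
Proof. intros Hn. split; [apply cset_closed|split; [apply cset_closed|split; [apply cset_nonempty; lra|split; [apply cset_nonempty; lra|]]]].
  intros w [_ H1] [_ H0]. specialize (H1 0%nat ltac:(lia)). specialize (H0 0%nat ltac:(lia)). lra. Qed.

Definition ev0 n (hn : (1 <= n)%nat) : evaluation n :=
  mkEval n (fun _ => (cset n 1, cset n 0)) (fun _ => adm0 n hn).

Lemma part1 n k ev : (1 <= n)%nat -> satisfies_all n ev (theoryT n k) ->
     (forall w, vplus n ev (Dep k) w <-> (inW n w /\ forall i, (i < n)%nat -> w i = 1)) /\
     (forall w, vminus n ev (Dep k) w <-> (inW n w /\ forall i, (i < n)%nat -> w i = 0)).
Proof. intros Hn H.
  assert (T1 := H _ (or_introl eq_refl)). assert (T0 := H _ (or_intror eq_refl)).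
  pose proof (dep_adm n ev k) as [CP [CM [NP [NM Dj]]]].
  simpl vplus; simpl vminus.
  split; intros w; split.
  - intros Hw. assert (Hi : inW n w) by (apply (proj1 CP); auto). split; auto.
    destruct (dist_exists n _ w NM) as [b Hb].
    pose proof (dist_set_ge0 _ _ _ _ Hb).
    assert (b <> 0). { intro; subst. apply (Dj w); auto. apply (dist_set_zero_in n); auto. }
    apply (bigand_basic n ev w 1); auto. lra.
    apply (iff_den _ _ _ _ _ (T1 w Hi)). split; auto.
    exists 0, b. split; [apply (dist_set_in n); auto|split; auto]. field. lra.
  - intros [Hi Hall]. apply (bigand_basic n ev w 1) in Hall; auto; [|lra].
    apply (iff_den _ _ _ _ _ (T1 w Hi)) in Hall. destruct Hall as [_ [a [b [Ha [Hb Hc]]]]].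
    pose proof (dist_set_ge0 _ _ _ _ Ha). pose proof (dist_set_ge0 _ _ _ _ Hb).
    assert (a = 0).
    { destruct (Req_dec (a+b) 0).
      - assert (b = 0) by lra. rewrite H3 in Hc. unfold Rdiv in Hc. rewrite Rmult_0_l in Hc. lra.
      - assert (b / (a+b) * (a+b) = b) by (field; auto). rewrite <- Hc in H3. lra. }
    subst. apply (dist_set_zero_in n); auto.
  - intros Hw. assert (Hi : inW n w) by (apply (proj1 CM); auto). split; auto.
    destruct (dist_exists n _ w NP) as [a Ha].
    pose proof (dist_set_ge0 _ _ _ _ Ha).
    assert (a <> 0). { intro; subst. apply (Dj w); auto. apply (dist_set_zero_in n); auto. }
    apply (bigand_basic n ev w 0); auto. lra.
    apply (iff_den _ _ _ _ _ (T0 w Hi)). split; auto.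
    exists a, 0. split; [auto|split; [apply (dist_set_in n); auto|]]. unfold Rdiv; ring.
  - intros [Hi Hall]. apply (bigand_basic n ev w 0) in Hall; auto; [|lra].
    apply (iff_den _ _ _ _ _ (T0 w Hi)) in Hall. destruct Hall as [_ [a [b [Ha [Hb Hc]]]]].
    pose proof (dist_set_ge0 _ _ _ _ Ha). pose proof (dist_set_ge0 _ _ _ _ Hb).
    assert (b = 0).
    { destruct (Req_dec (a+b) 0). lra.
      assert (b / (a+b) * (a+b) = b) by (field; auto). rewrite <- Hc in H3. lra. }
    subst. apply (dist_set_zero_in n); auto. Qed.

Theorem mainTheorem11 (n k : nat) (hn : (1 <= n)%nat) :
  (forall ev : evaluation n, satisfies_all n ev (theoryT n k) ->
     (forall w, vplus n ev (Dep k) w <-> (inW n w /\ forall i, (i < n)%nat -> w i = 1)) /\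
     (forall w, vminus n ev (Dep k) w <-> (inW n w /\ forall i, (i < n)%nat -> w i = 0)) /\
     (forall w, inW n w -> holds_deg n ev (Dep k) w (sumR n w / INR n))) /\
  (forall c : nat -> R, (forall i, (i < n)%nat -> 0 <= c i <= 1) ->
     entails n (theoryT n k)
       (FImp (BigAnd n (fun i => GV (Basic i) (c i)))
             (GV (Dep k) (sumR n c / INR n)))).
Proof.
  split.
  - intros ev H. destruct (part1 n k ev hn H) as [HP HM]. split; [auto|split; [auto|]].
    intros w Hw. apply (dep_deg n ev k w); auto.
  - intros c Hc. split.
    + exists (ev0 n hn). intros F [-> | ->] w Hw.
      * apply iff_intro; auto. rewrite bigand_basic by (auto; lra). simpl den.
        rewrite (dep_deg n (ev0 n hn) k w 1); auto; try (intros; simpl; unfold cset; tauto).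
        rewrite <- avg_one by auto. split; [intros [_ X]; apply eq_sym; exact X|]. intros X; split; auto.
      * apply iff_intro; auto. rewrite bigand_basic by (auto; lra). simpl den.
        rewrite (dep_deg n (ev0 n hn) k w 0); auto; try (intros; simpl; unfold cset; tauto).
        rewrite <- avg_zero by auto. split; [intros [_ X]; apply eq_sym; exact X|]. intros X; split; auto.
    + intros ev H w Hw. destruct (part1 n k ev hn H) as [HP HM].
      unfold FImp. simpl den.
      destruct (classic (den n ev (BigAnd n (fun i => GV (Basic i) (c i))) w)) as [Hb|Hb]; [right|left; auto].
      split; auto. rewrite (dep_deg n ev k w); auto.
      rewrite bigand_den in Hb by auto. f_equal. apply sumR_ext. intros i Hi.
      destruct (Hb i Hi) as [_ Hd]. simpl in Hd. rewrite basic_deg in Hd; auto.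
Qed.
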